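(* Let $G$ be a finite solvable $\mathbf{GC}^*$-group and let $K = G_\infty$, and assume $K > 1$. Let $N < K$ be such that either $N = 1$ or $N$ is the unique minimal normal subgroup of $G$ contained in $K$. If $\gcd(|G/K|, |K/N|) = 1$, then $G$ is a Frobenius group with Frobenius kernel $K$.
   Context: $G_\infty$ denotes the nilpotent residual of $G$, i.e. the last term of the lower central series of $G$. Galois automorphisms act on characters by $\chi^\alpha(g)=\chi(g)^\alpha$; two irreducible characters of $G$ are Galois conjugate if one is the image of the other under some element of $\mathrm{Gal}(\mathbb{Q}_n|\mathbb{Q})$ with $|G|$ dividing $n$. A finite group is a $\mathbf{GC}^*$-group if any two of its non-linear irreducible characters of the same degree are Galois conjugate. *)

(* Defs.v *)
From HB Require Import structures.
From mathcomp Require Import all_boot all_order all_algebra all_fingroup all_solvable all_field all_character.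
Set Implicit Arguments. Unset Strict Implicit. Unset Printing Implicit Defensive.
Import GRing.Theory Num.Theory.
Local Open Scope group_scope.
Local Open Scope ring_scope.

(* The series 'L_1(G) = G >= 'L_2(G) >= ... is non-increasing and stabilizes
   after at most #|G| steps, so 'L_#|G|(G) is its last (stable) term. *)
Definition nil_residual (gT : finGroupType) (G : {group gT}) : {group gT} :=
  ('L_#|G|(G))%G.

(* Two irreducible characters are Galois conjugate: one is the image of the
   other under a field automorphism of algC (every element of Gal(Q_n/Q)
   extends to such an automorphism, and every such automorphism restricts
   to Gal(Q_n/Q)). *)
Definition galois_conj (gT : finGroupType) (G : {group gT}) (i j : Iirr G) :=
  exists u : {rmorphism algC -> algC}, 'chi[G]_j = cfAut u 'chi[G]_i.

Definition GCstar (gT : finGroupType) (G : {group gT}) : Prop :=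
  forall i j : Iirr G,
    ~~ ('chi[G]_i \is a linear_char) -> ~~ ('chi[G]_j \is a linear_char) ->
    'chi[G]_i 1%g = 'chi[G]_j 1%g -> galois_conj i j.

(* Main.v *)
Require Import Defs.
From mathcomp Require Import all_boot all_order all_algebra all_fingroup all_solvable all_field all_character.
Set Implicit Arguments. Unset Strict Implicit. Unset Printing Implicit Defensive.
Import GRing.Theory Num.Theory.

Section Aux.
Local Open Scope group_scope.
Local Open Scope ring_scope.
Variable gT : finGroupType.

Lemma cfDet_aut (G : {group gT}) u (phi : 'CF(G)) :
  phi \is a character -> cfDet (cfAut u phi) = cfAut u (cfDet phi).
Proof.
move=> /char_reprP[rG ->]; rewrite -cfRepr_map !cfDetRepr.
apply/cfun_inP=> x Gx; rewrite cfunE /= cfunE !cfunE Gx /= !trace_mx11 !mxE.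
by rewrite map_reprE det_map_mx.
Qed.

Lemma cforder_det_aut (G : {group gT}) u (phi : 'CF(G)) :
  phi \is a character -> 'o(cfAut u phi)%CF = 'o(phi)%CF.
Proof. by move=> Nphi; rewrite /cfDet_order cfDet_aut // cforder_aut. Qed.

Lemma inertia_aut (K : {group gT}) u (phi : 'CF(K)) :
  'I[cfAut u phi] = 'I[phi].
Proof.
apply/setP=> y; rewrite !inE.
by rewrite -cfAutConjg (inj_eq (cfAut_inj u)).
Qed.

End Aux.

Section B.
Local Open Scope group_scope.
Local Open Scope ring_scope.
Variable gT : finGroupType.

Lemma over_nontriv_nonlin (G K : {group gT}) (t : Iirr K) (i : Iirr G) :
  K <| G -> K \subset (G^`(1))%g -> t != 0 ->
  t \in irr_constt ('Res[K] 'chi_i) -> ~~ ('chi_i \is a linear_char).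
Proof.
move=> nsKG sKG' nzt tRes; apply/negP=> lin.
have sKker : K \subset cfker 'chi_i := subset_trans sKG' (lin_char_der1 lin).
move: tRes; have nzt0 : (0 == t) = false by rewrite eq_sym (negPf nzt).
rewrite irr_consttE cfRes_sub_ker // cfdotZl -irr0 cfdot_irr nzt0.
by rewrite mulr0 eqxx.
Qed.


Lemma cforder_conjg (H : {group gT}) y (phi : 'CF(H)) : #[(phi ^ y)%CF]%CF = #[phi]%CF.
Proof. exact: (cforder_inj_rmorph (f := cfConjg y) phi (can_inj (cfConjgK y))). Qed.

Lemma inertia_triv (G K : {group gT}) (t : Iirr K) :
  K <| G -> K \subset (G^`(1))%g -> solvable G -> GCstar G -> t != 0 ->
  coprime #|G : K| ('o('chi_t)%CF * Num.truncn ('chi_t 1%g)) ->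
  'I_G['chi_t] = K.
Proof.
move=> nsKG sKG' solG GC nzt coGK.
have [sKG nKG] := andP nsKG.
set theta := 'chi_t.
set T := 'I_G[theta]%G.
have sKT : K \subset T by rewrite sub_Inertia.
have sTG : T \subset G by rewrite Inertia_sub.
apply/eqP; rewrite eqEsubset sKT andbT; apply/negP => nTK.
have nsKT : K <| T := normal_Inertia theta sKG.
have ITt : T \subset 'I[theta] by rewrite subsetIr.
have coT : coprime #|T : K| ('o(theta)%CF * Num.truncn (theta 1%g)).
  by apply: coprime_dvdl coGK; apply: indexSg.
have solT : solvable (T / K) := quotient_sol _ (solvableS sTG solG).
have [c [cK oc Uc]] := extend_solvable_coprime_irr nsKT solT ITt coT.
have nKT : T \subset 'N(K) := subset_trans sTG nKG.
have ntTK : (T / K)%g != 1%g.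
  by rewrite -subG1 quotient_sub1 //; apply/negP.
have ltTb := sol_der1_proper solT (subxx _) ntTK.
have gt1 : (1 < #|[pred i | 'chi[T / K]_i \is a linear_char]|)%N.
  by rewrite card_lin_irr indexg_gt1 proper_subn.
have /existsP[jb /andP[lin_jb nzjb]] :
    [exists jb : Iirr (T / K), ('chi_jb \is a linear_char) && (jb != 0)].
  move: gt1; apply: contraLR => /existsPn Hn; rewrite -leqNgt.
  rewrite -[X in (_ <= X)%N](card1 (0 : Iirr (T / K))); apply: subset_leq_card.
  apply/subsetP => i; rewrite !inE => li; move: (Hn i).
  by rewrite li /= negbK.
have [irrM injM imM _] := constt_Ind_ext nsKT cK.
set c' := mul_mod_Iirr c jb.
have Dc' : 'chi_c' = 'chi_(mod_Iirr jb) * 'chi_c.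
  by rewrite /c' /mul_mod_Iirr /mul_Iirr cfIirrE.
have c'c : c' != c.
  apply: contra nzjb => /eqP eqc; apply/eqP/injM.
  rewrite -/c' eqc /mul_mod_Iirr /mul_Iirr mod_Iirr0 irr0 mul1r.
  by rewrite irrK.
have lin_b : 'chi_(mod_Iirr jb) \is a linear_char.
  by rewrite mod_IirrE // cfMod_lin_char.
have bK : 'Res[K] 'chi_(mod_Iirr jb) = 1.
  rewrite cfRes_sub_ker; last by rewrite mod_IirrE ?cfker_mod.
  by rewrite lin_char1 // scale1r.
have c'K : 'Res[K] 'chi_c' = theta by rewrite Dc' rmorphM /= bK mul1r cK.
have [irrInd injInd _ _ dotInd] := constt_Inertia_bijection t nsKG.
have Ac : c \in irr_constt ('Ind[T] theta) by rewrite constt_Ind_Res cK constt_irr inE.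
have Ac' : c' \in irr_constt ('Ind[T] theta) by rewrite constt_Ind_Res c'K constt_irr inE.
set i1 := Ind_Iirr G c; set i2 := Ind_Iirr G c'.
have Di1 : 'chi_i1 = 'Ind[G] 'chi_c := cfIirrE (irrInd c Ac).
have Di2 : 'chi_i2 = 'Ind[G] 'chi_c' := cfIirrE (irrInd c' Ac').
have i12 : i1 != i2.
  apply: contra c'c => /eqP e; apply/eqP; symmetry; exact: injInd Ac Ac' e.
have t_i1 : t \in irr_constt ('Res[K] 'chi_i1).
  by rewrite irr_consttE Di1 -(dotInd c Ac) cK cfnorm_irr oner_eq0.
have t_i2 : t \in irr_constt ('Res[K] 'chi_i2).
  by rewrite irr_consttE Di2 -(dotInd c' Ac') c'K cfnorm_irr oner_eq0.
have nl1 := over_nontriv_nonlin nsKG sKG' nzt t_i1.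
have nl2 := over_nontriv_nonlin nsKG sKG' nzt t_i2.
have deg : 'chi_i1 1%g = 'chi_i2 1%g.
  by rewrite Di1 Di2 !cfInd1 // Dc' cfunE (lin_char1 lin_b) mul1r.
have [u Du] := GC i1 i2 nl1 nl2 deg.
set tu := aut_Iirr u t.
have tu_i2 : tu \in irr_constt ('Res[K] 'chi_i2).
  rewrite irr_consttE Du -cfAutRes aut_IirrE cfdot_aut_irr fmorph_eq0.
  by rewrite -irr_consttE.
have DRes := Clifford_Res_sum_cfclass nsKG t_i2.
have : 'chi_tu \in ('chi_t ^: G)%CF.
  apply: contraLR tu_i2 => notin; rewrite irr_consttE negbK DRes cfdotZl.
  rewrite cfdot_suml big1_seq ?mulr0 // => xi /andP[_ /cfclassP[y Gy ->]].
  rewrite -conjg_IirrE cfdot_irr; case: eqP => [e|]; last by [].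
  by case/negP: notin; rewrite -e conjg_IirrE; apply/cfclassP; exists y.
case/cfclassP => g Gg; rewrite aut_IirrE => Dtu.
have nKg : g \in 'N(K) := subsetP nKG g Gg.
have nTg : g \in 'N(T).
  apply/normP; rewrite /T /= conjIg (conjGid Gg) conjg_inertia //.
  by rewrite -Dtu inertia_aut.
have nKg' : (g^-1)%g \in 'N(K) by rewrite groupV.
have nTg' : (g^-1)%g \in 'N(T) by rewrite groupV.
have /irrP[d Dd] : (cfAut u 'chi_c ^ (g^-1)%g)%CF \in irr T.
  by rewrite cfConjg_irr ?cfAut_irr ?mem_irr.
have dK : 'Res[K] 'chi_d = theta.
  rewrite -Dd -cfConjgRes_norm // -cfAutRes cK Dtu.
  exact: cfConjgK.
have od : 'o('chi_d)%CF = 'o(theta)%CF.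
  rewrite -Dd /cfDet_order cfDetConjg.
  rewrite (cforder_inj_rmorph (f := cfConjg (g^-1)%g) _ (can_inj (cfConjgK _))).
  by rewrite -/(cfDet_order _) cforder_det_aut ?irr_char // oc.
have dc : d = c.
  apply: Uc => //; rewrite od; apply: coprime_dvdr coT; exact: dvdn_mulr.
have Dcu : cfAut u 'chi_c = ('chi_c ^ g)%CF.
  by rewrite -{2}dc -Dd cfConjgKV.
case/negP: i12; apply/eqP/irr_inj.
rewrite Du Di1 cfAutInd Dcu -cfConjgInd_norm //; last exact: subsetP (normG G) g Gg.
by rewrite cfConjg_id.
Qed.


Lemma frob_from_inertia (G K : {group gT}) :
  K :!=: 1%g -> K \proper G -> K <| G ->
  (forall t : Iirr K, t != 0 -> 'I_G['chi_t] = K) -> [Frobenius G with kernel K].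
Proof.
move=> ntK ltKG nsKG Iner; have [sKG nKG] := andP nsKG.
apply/Frobenius_kerP; split => // x /setD1P[ntx Kx].
apply/subsetP => y /setIP[Gy cxy]; apply: contraT => notKy.
have actIirrK: is_action G (@conjg_Iirr _ K).
  split=> [z j k eq_jk | j z w Gz Gw].
    by apply/irr_inj/(can_inj (cfConjgK z)); rewrite -!conjg_IirrE eq_jk.
  by apply: irr_inj; rewrite !conjg_IirrE (cfConjgM _ nsKG).
pose ito := Action actIirrK; pose cto := ('Js \ (subsetT G))%act.
have acts_Js : [acts G, on classes K | 'Js].
  apply/subsetP=> z Gz; have nKz := subsetP nKG z Gz.
  rewrite !inE; apply/subsetP=> _ /imsetP[w Gw ->] /[!inE]/=.
  rewrite -class_rcoset norm_rlcoset // class_lcoset.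
  by apply: imset_f; rewrite memJ_norm.
have acts_cto : [acts G, on classes K | cto] by rewrite astabs_ract subsetIidl.
pose m := #|'Fix_(classes K | cto)[y]|.
have def_m: #|'Fix_ito[y]| = m.
  apply: card_afix_irr_classes => // j z _ Kz /imsetP[_ /imsetP[w Kw ->] ->].
  by rewrite conjg_IirrE cfConjgEJ ?(subsetP nKG y Gy) // cfunJ.
have m1 : #|'Fix_ito[y]| = 1%N.
  apply/eqP/cards1P; exists 0; apply/eqP; rewrite eqEsubset sub1set.
  rewrite !inE sub1set inE /= conjg_Iirr0 eqxx andbT.
  apply/subsetP => j /afix1P /= fj; rewrite inE; apply: contraT => nzj.
  case/negP: notKy; rewrite -(Iner j nzj) inE Gy /= inE (subsetP nKG y Gy) /=.
  by rewrite -conjg_IirrE fj.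
have nKy := subsetP nKG y Gy.
have f1 : [set 1%g] \in 'Fix_(classes K | cto)[y].
  rewrite inE classes1 /= inE sub1set inE /= conjs1g //.
have fx : x ^: K \in 'Fix_(classes K | cto)[y].
  rewrite inE mem_classes //= inE sub1set inE /=.
  rewrite -class_rcoset norm_rlcoset // class_lcoset.
  by rewrite /conjg -(cent1P cxy) mulKg.
have neq : [set 1%g] != x ^: K.
  apply/negP => /eqP e.
  by move: (class_refl K x); rewrite -e inE (negPf ntx).
have : (2 <= m)%N.
  have := cards2 [set 1%g] (x ^: K); rewrite neq => <-.
  by apply: subset_leq_card; apply/subsetP => A /set2P[] ->.
by rewrite -def_m m1.
Qed.


Lemma ito_coprime (K N : {group gT}) (t : Iirr K) :
  N <| K -> abelian N -> coprime #|N| #|K : N| ->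
  (Num.truncn ('chi_t 1%g) %| #|K : N|)%N.
Proof.
move=> nsNK abN coN; have [sNK nNK] := andP nsNK.
suff Hd : ('chi_t 1%g %| (#|K : N|%:R : algC))%C.
  by move: Hd; rewrite irr1_degree natrK -dvdC_nat.
have [s sRes] := constt_cfRes_irr N t.
set lam := 'chi_s.
have lin_lam : lam \is a linear_char by apply/char_abelianP.
set I := 'I_K[lam]%G.
have sNI : N \subset I by rewrite sub_Inertia.
have sIK : I \subset K by rewrite Inertia_sub.
have nsNI : N <| I := normal_Inertia lam sNK.
have [irrInd _ imInd _ _] := constt_Inertia_bijection s nsNK.
have tB : t \in irr_constt ('Ind[K] lam) by rewrite constt_Ind_Res.
have /imsetP[r rA Dt] : t \in Ind_Iirr K @: irr_constt ('Ind[I] lam).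
  by rewrite imInd.
have Dth : 'chi_t = 'Ind[K] 'chi_r by rewrite Dt cfIirrE ?irrInd.
have ILam : I \subset 'I[lam] by rewrite subsetIr.
have coI : coprime #|I : N| 'o(lam)%CF.
  rewrite coprime_sym; apply: coprime_dvdl (cfDet_order_dvdG lam) _.
  by apply: coprime_dvdr coN; apply: indexSg.
have [u [uN _ _]] := extend_coprime_linear_char nsNI lin_lam ILam coI.
have [irrMu _ imM _] := constt_Ind_ext nsNI uN.
have := rA; rewrite imM => /codomP[b Dr].
have Dr' : 'chi_r = 'chi_(mod_Iirr b) * 'chi_u.
  by rewrite Dr /mul_mod_Iirr /mul_Iirr cfIirrE ?irrMu.
have u1 : 'chi_u 1%g = 1.
  by rewrite -(cfRes1 N) uN lin_char1.
rewrite Dth cfInd1 // Dr' cfunE u1 mulr1 mod_IirrE // cfMod1.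
rewrite -(Lagrange_index sIK sNI) natrM dvdC_mul2l ?pnatr_eq0 -?lt0n ?indexg_gt0 //.
by rewrite -card_quotient ?normal_norm // dvd_irr1_cardG.
Qed.


Lemma coprime_char (G K N : {group gT}) (t : Iirr K) :
  solvable G -> K <| G -> N \proper K ->
  (N :=: 1%g \/ [/\ minnormal N G, N \subset K &
     forall M : {group gT}, minnormal M G -> M \subset K -> M :=: N]) ->
  coprime #|G : K| #|K : N| ->
  coprime #|G : K| ('o('chi_t)%CF * Num.truncn ('chi_t 1%g)).
Proof.
move=> solG nsKG ltNK hN co.
have [sKG nKG] := andP nsKG; have sNK := proper_sub ltNK.
have dvK1 : ('o('chi_t)%CF %| #|K|)%N := cfDet_order_dvdG _.
have dvK2 : (Num.truncn ('chi_t 1%g) %| #|K|)%N.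
  by rewrite irr1_degree natrK -dvdC_nat; move: (dvd_irr1_cardG t); rewrite irr1_degree.
have [coN | ncoN] := boolP (coprime #|G : K| #|N|).
  have coK : coprime #|G : K| #|K| by rewrite -(Lagrange sNK) coprimeMr coN co.
  by rewrite coprimeMr !(coprime_dvdr _ coK).
case: hN => [N1 | [minN _ uniqN]].
  by rewrite N1 cards1 coprimen1 in ncoN.
have sNG := subset_trans sNK sKG.
have [nNG ntN /is_abelemP[p pr_p abelN]] := minnormal_solvable minN sNG solG.
have pN := abelem_pgroup abelN; have abN := abelem_abelian abelN.
have pe : (p %| #|G : K|)%N.
  apply: contraR ncoN => npe; rewrite coprime_sym; apply: pnat_coprime pN _.
  by rewrite p'natE.
have npKN : ~~ (p %| #|K : N|)%N.
  by have := coprime_dvdl pe co; rewrite prime_coprime.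
have coNKN : coprime #|N| #|K : N| by apply: pnat_coprime pN _; rewrite p'natE.
have nsNG : N <| G by apply/andP.
have nsNK : N <| K := normalS sNK sKG nsNG.
have ito := ito_coprime t nsNK abN coNKN.
have sNK' : N \subset (K^`(1))%g.
  apply: contraT => nNK'.
  have K'1 : (K^`(1))%g = 1%g.
    apply/eqP; apply: contraR nNK' => ntK'.
    have nK'G : G \subset 'N(K^`(1)) := char_norm_trans (der_char 1 K) nKG.
    have [M minM sMK'] := minnormal_exists ntK' nK'G.
    by rewrite -(uniqN M minM (subset_trans sMK' (der_sub 1 K))).
  have abK : abelian K by apply/derG1P.
  have L1 : 'O_p^'(K) = 1%g.
    apply/eqP; apply: contraR ntN => ntL.
    have nLG : G \subset 'N('O_p^'(K)) := char_norm_trans (pcore_char _ K) nKG.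
    have [M minM sML] := minnormal_exists ntL nLG.
    have eMN := uniqN M minM (subset_trans sML (pcore_sub _ _)).
    rewrite eMN in sML.
    have p'N := pgroupS sML (pcore_pgroup _ _).
    by rewrite trivg_card1 (pnat_1 pN p'N).
  have pK : p.-group K.
    have := nilpotent_pcoreC p (abelian_nil abK); rewrite L1 dprodg1 => <-.
    exact: pcore_pgroup.
  have pKN : p.-nat #|K : N| := pnat_dvd (dvdn_indexg K N) pK.
  have : #|K : N| = 1%N by apply: pnat_1 pKN _; rewrite p'natE.
  by move/eqP; rewrite indexg_eq1 => sKN; case/negP: (proper_subn ltNK).
have dvo : ('o('chi_t)%CF %| #|K : N|)%N.
  have lin := cfDet_lin_char 'chi_t.
  rewrite /cfDet_order cforder_lin_char //.
  apply: dvdn_trans (exponent_dvdn _) _.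
  rewrite card_quotient ?normal_norm ?cfker_normal //.
  apply: indexgS; apply: subset_trans sNK' _; exact: lin_char_der1.
by rewrite coprimeMr !(coprime_dvdr _ co).
Qed.

End B.

Local Open Scope group_scope.

Theorem lemma3p3 (gT : finGroupType) (G N : {group gT}) :
  solvable G -> GCstar G ->
  nil_residual G != 1 :> {set gT} ->
  N \proper nil_residual G ->
  (N :=: 1 \/
   [/\ minnormal N G, N \subset nil_residual G &
       forall M : {group gT}, minnormal M G -> M \subset nil_residual G ->
         M :=: N]) ->
  coprime #|G / nil_residual G| #|nil_residual G / N| ->
  [Frobenius G with kernel nil_residual G].
Proof.
move=> solG GC ntK ltNK hN co.
have nsKG : nil_residual G <| G by exact: lcn_normal.
have sKG := normal_sub nsKG; have nKG := normal_norm nsKG.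
have sNK := proper_sub ltNK.
have ntG : G :!=: 1.
  apply: contraNneq ntK => G1; apply/eqP/trivgP; rewrite -G1; exact: sKG.
have sKG' : nil_residual G \subset G^`(1).
  rewrite /nil_residual /= -lcn2; apply: lcn_sub_leq; by rewrite cardG_gt1.
have ltKG : nil_residual G \proper G.
  rewrite properEneq sKG andbT; apply/negP => /eqP KG.
  case/negP: (proper_subn (sol_der1_proper solG (subxx G) ntG)).
  by rewrite -{1}KG.
have nNK : nil_residual G \subset 'N(N).
  case: hN => [-> | [minN _ _]]; first by rewrite norms1.
  have [nNG _ _] := minnormal_solvable minN (subset_trans sNK sKG) solG.
  exact: subset_trans sKG nNG.
rewrite !card_quotient // in co.
apply: frob_from_inertia => // t nzt.
apply: inertia_triv => //.
exact: (coprime_char t solG nsKG ltNK hN co).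
Qed.
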